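(* With $n=2p+1$ agents and complete information, the RC mechanism with abstention subgame perfect implements the majority rule: for every preference profile $R$, every subgame-perfect equilibrium yields the outcome $Maj(R)$, and some subgame-perfect equilibrium yields $Maj(R)$.
   Context: Agents $I=\{1,\dots,n\}$, $n=2p+1$, options $A=\{a,b\}$, strict preferences over $A$, commonly known. Majority rule: $Maj(R)=a$ if at least $p+1$ agents prefer $a$, else $b$. Lotteries are compared by stochastic dominance (an agent preferring $x$ weakly (strictly) prefers $\beta$ to $\eta$ iff $\beta(x)\ge\eta(x)$ ($>$)). RC mechanism with abstention: Voting stage: each agent simultaneously chooses $v_i\in\{a,b,\mathrm{abs}\}$; the profile $v$ is publicly announced. If $a$ and $b$ receive equally many votes (including the case where everyone abstains), the outcome is the lottery giving probability $1/2$ to each option. Otherwise the option with more votes is the Voting-stage winner, and a Confirmation stage follows: $p+1$ agents are drawn uniformly at random from all agents and ordered uniformly, $\pi_1,\dots,\pi_{p+1}$; sequentially, as long as nobody has announced $Y$, agent $\pi_t$ announces $Y$, $N$, or abstains. If some agent announces $Y$, the outcome is the Voting-stage winner; if all announce $N$ or abstain, the outcome is the lottery $\beta(v)$ with $\beta_a(v)=|\{i:v_i=a\}|/(|\{i:v_i=a\}|+|\{i:v_i=b\}|)$, $\beta_b(v)=1-\beta_a(v)$. *)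

(* Defs.v *)
(* Lotteries over {a,b} are represented by the probability
   of option a (a rational number). *)
From HB Require Import structures.
From mathcomp Require Import all_boot all_order all_algebra.
Set Implicit Arguments. Unset Strict Implicit. Unset Printing Implicit Defensive.
Import Order.TTheory GRing.Theory Num.Theory.
Local Open Scope ring_scope.

Section RC.
Variable p : nat.

Definition agent := 'I_(p.*2.+1).

Definition vote := option bool.
Definition vA : vote := Some true.
Definition vB : vote := Some false.
Definition vAbs : vote := None.

Definition ann := option bool.
Definition annY : ann := Some true.
Definition annN : ann := Some false.
Definition annAbs : ann := None.

(* preference profile: R i = true iff agent i prefers a to b *)
Definition profile := agent -> bool.
Definition vprofile := agent -> vote.
(* an ordered draw pi_1..pi_{p+1} (uniform over injective tuples) *)
Definition draw := (p.+1).-tuple agent.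

Definition nA (v : vprofile) : nat := #|[pred i | v i == vA]|.
Definition nB (v : vprofile) : nat := #|[pred i | v i == vB]|.
Definition tie (v : vprofile) : bool := nA v == nB v.

(* probability of a under the Voting-stage winner (used when no tie) *)
Definition winner_prob (v : vprofile) : rat := if (nB v < nA v)%N then 1 else 0.
Definition beta_a (v : vprofile) : rat := (nA v)%:R / (nA v + nB v)%:R.

(* utility of a lottery (prob q of a) for agent i; stochastic dominance
   over {a,b} is exactly comparison of this quantity *)
Definition util (R : profile) (i : agent) (q : rat) : rat := if R i then q else 1 - q.

Definition maj_prob (R : profile) : rat :=
  if (p.+1 <= #|[pred i | R i]|)%N then 1 else 0.

(* confirmation-stage strategy: given the announced vote profile, the
   (publicly observed) draw, and the announcements made so far *)
Definition cstrat := vprofile -> draw -> seq ann -> ann.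

Record strategy := Strategy {
  svote : agent -> vote;
  sconf : agent -> cstrat }.

Fixpoint conf_run (sc : agent -> cstrat) (v : vprofile) (pi : draw) (k : nat)
    (h : seq ann) : rat :=
  match k with
  | 0 => beta_a v
  | k'.+1 =>
      let j := nth ord0 pi (size h) in
      let a := sc j v pi h in
      if a == annY then winner_prob v else conf_run sc v pi k' (rcons h a)
  end.

Definition conf_out (sc : agent -> cstrat) (v : vprofile) (pi : draw) (h : seq ann) : rat :=
  conf_run sc v pi (p.+1 - size h) h.

Definition conf_avg (sc : agent -> cstrat) (v : vprofile) : rat :=
  (\sum_(pi : draw | uniq pi) conf_out sc v pi [::])
    / (#|[pred pi : draw | uniq pi]|)%:R.

Definition outcome (s : strategy) : rat :=
  let v := svote s in if tie v then 1 / 2 else conf_avg (sconf s) v.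

Definition dev_conf (sc : agent -> cstrat) (i : agent) (c : cstrat) : agent -> cstrat :=
  fun j => if j == i then c else sc j.

Definition dev (s : strategy) (i : agent) (vi : vote) (c : cstrat) : strategy :=
  Strategy (fun j => if j == i then vi else svote s j) (dev_conf (sconf s) i c).

Definition SPE (R : profile) (s : strategy) : Prop :=
  (forall i vi c, util R i (outcome (dev s i vi c)) <= util R i (outcome s)) /\
  (forall v : vprofile, ~~ tie v -> forall i c,
      util R i (conf_avg (dev_conf (sconf s) i c) v) <= util R i (conf_avg (sconf s) v)) /\
  (forall (v : vprofile) (pi : draw) (h : seq ann),
      ~~ tie v -> uniq pi -> (size h <= p)%N -> all (fun a => a != annY) h ->
      forall i c,
      util R i (conf_out (dev_conf (sconf s) i c) v pi h) <= util R i (conf_out (sconf s) v pi h)).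

End RC.

(* Main.v *)
Require Import Defs.
From mathcomp Require Import all_boot all_order all_algebra.
From mathcomp Require Import zify ring lra.
From Stdlib Require Import FunctionalExtensionality Classical.
Set Implicit Arguments. Unset Strict Implicit. Unset Printing Implicit Defensive.
Import Order.TTheory GRing.Theory Num.Theory.
Local Open Scope ring_scope.


Definition px (x : bool) (q : rat) : rat := if x then q else 1 - q.
Definition nX p (v : vprofile p) (x : bool) : nat := #|[pred i | v i == Some x]|.
Lemma nXT p (v : vprofile p) : nX v true = nA v. Proof. by []. Qed.
Lemma nXF p (v : vprofile p) : nX v false = nB v. Proof. by []. Qed.
Lemma util_px p (R : profile p) i q : util R i q = px (R i) q. Proof. by []. Qed.
Lemma pxN x q : px (~~ x) q = 1 - px x q.
Proof. by case: x => /=; ring. Qed.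

Lemma conf_run_val p (sc : agent p -> cstrat p) v (pi : draw p) k (h : seq ann) :
  conf_run sc v pi k h = winner_prob v \/ conf_run sc v pi k h = beta_a v.
Proof.
elim: k h => [|k IH] h /=; first by right.
by case: ifP => _; [left|apply: IH].
Qed.

Lemma conf_run_Y p (sc : agent p -> cstrat p) v (pi : draw p) k (h : seq ann) u :
  (size h <= u < size h + k)%N ->
  (forall h', sc (nth ord0 pi u) v pi h' = annY) ->
  conf_run sc v pi k h = winner_prob v.
Proof.
elim: k h => [|k IH] h Hu HY /=; first by lia.
case: ifP => // Hne.
have [Eu|Nu] := eqVneq u (size h).
  by move: Hne; rewrite -Eu HY eqxx.
apply: IH => //; rewrite size_rcons; move: Nu => /eqP; lia.
Qed.

Lemma conf_run_N p (sc : agent p -> cstrat p) v (pi : draw p) k (h : seq ann) :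
  (forall u, (size h <= u < size h + k)%N ->
    forall h', sc (nth ord0 pi u) v pi h' != annY) ->
  conf_run sc v pi k h = beta_a v.
Proof.
elim: k h => [|k IH] h HN /=; first by [].
rewrite (negbTE (HN (size h) _ h)); last by lia.
apply: IH => u Hu; apply: HN; rewrite size_rcons in Hu; lia.
Qed.

Lemma conf_run_ext p (sc1 sc2 : agent p -> cstrat p) v (pi : draw p) k (h : seq ann) :
  (forall u, (size h <= u < size h + k)%N ->
    forall h', sc1 (nth ord0 pi u) v pi h' = sc2 (nth ord0 pi u) v pi h') ->
  conf_run sc1 v pi k h = conf_run sc2 v pi k h.
Proof.
elim: k h => [|k IH] h HE /=; first by [].
rewrite (HE (size h) _ h); last by lia.
case: ifP => // _; apply: IH => u Hu; apply: HE; rewrite size_rcons in Hu; lia.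
Qed.

Lemma winner_01 p (v : vprofile p) : 0 <= winner_prob v <= 1.
Proof. by rewrite /winner_prob; case: ifP. Qed.

Lemma beta_01 p (v : vprofile p) : 0 <= beta_a v <= 1.
Proof.
rewrite /beta_a; have [->|Hp] := eqVneq (nA v + nB v)%N 0%N.
  by rewrite invr0 mulr0 lexx ler01.
have Hp' : 0 < (nA v + nB v)%:R :> rat by rewrite ltr0n lt0n.
rewrite divr_ge0 ?ler0n //= ler_pdivrMr // mul1r ler_nat; lia.
Qed.

Lemma conf_run_01 p (sc : agent p -> cstrat p) v (pi : draw p) k (h : seq ann) :
  0 <= conf_run sc v pi k h <= 1.
Proof. by case: (conf_run_val sc v pi k h) => ->; [apply: winner_01|apply: beta_01]. Qed.

Lemma px_01 x q : 0 <= q <= 1 -> 0 <= px x q <= 1.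
Proof. by case: x => //= /andP[? ?]; apply/andP; split; lra. Qed.

Lemma px_eq1 x q : px x q = 1 -> q = if x then 1 else 0.
Proof. by case: x => //= H; lra. Qed.

Lemma exists_draw p (P : pred (agent p)) : (p.+1 <= #|P|)%N ->
  exists pi : draw p, uniq pi /\ all P pi.
Proof.
move=> HP; set s := take p.+1 (enum P).
have sz : size s == p.+1 by rewrite size_takel // -cardE.
exists (Tuple sz); split; first exact: take_uniq (enum_uniq P).
by apply/allP => x /mem_take; rewrite mem_enum.
Qed.

Lemma draw_has p (P : pred (agent p)) (pi : draw p) : uniq pi ->
  (#|[pred j | ~~ P j]| <= p)%N -> exists2 j, j \in (pi : seq _) & P j.
Proof.
move=> Hu Hc; case: (boolP (has P pi)) => [/hasP //|Hn'].
have Hn : forall x, x \in (pi : seq _) -> ~~ P x.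
  by move=> x Hx; move: Hn'; rewrite -all_predC => /allP /(_ x Hx).
have : (#|pi| <= #|[pred j | ~~ P j]|)%N.
  by apply: subset_leq_card; apply/subsetP => x /Hn.
by rewrite (card_uniqP Hu) size_tuple; lia.
Qed.

Definition Nd p := #|[pred pi : draw p | uniq pi]|.

Lemma Nd_gt0 p : (0 < Nd p)%N.
Proof.
have [pi [Hu _]] : exists pi : draw p, uniq pi /\ all predT pi.
  by apply: exists_draw; rewrite card_ord; lia.
by apply/card_gt0P; exists pi.
Qed.

Definition avg p (f : draw p -> rat) := (\sum_(pi : draw p | uniq pi) f pi) / (Nd p)%:R.

Lemma conf_avgE p (sc : agent p -> cstrat p) v :
  conf_avg sc v = avg (fun pi => conf_out sc v pi [::]).
Proof. by []. Qed.

Lemma Nd_pos p : 0 < (Nd p)%:R :> rat.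
Proof. by rewrite ltr0n Nd_gt0. Qed.

Lemma avg_const p (c : rat) : avg (fun _ : draw p => c) = c.
Proof.
rewrite /avg (eq_bigl (fun pi => pi \in [pred pi : draw p | uniq pi])) //.
rewrite sumr_const -[c *+ _]mulr_natr; fold (Nd p); rewrite mulfK //; apply: lt0r_neq0; exact: Nd_pos.
Qed.

Lemma avg_le p (f g : draw p -> rat) : (forall pi : draw p, uniq pi -> f pi <= g pi) ->
  avg f <= avg g.
Proof.
move=> H; rewrite /avg ler_wpM2r ?invr_ge0 ?ler0n //; exact: ler_sum.
Qed.

Lemma avg_lt p (f g : draw p -> rat) : (forall pi : draw p, uniq pi -> f pi < g pi) ->
  avg f < avg g.
Proof.
move=> H; rewrite /avg ltr_pM2r ?invr_gt0 ?Nd_pos //.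
apply: ltr_sum => //.
have [pi [Hu _]] : exists pi : draw p, uniq pi /\ all predT pi.
  by apply: exists_draw; rewrite card_ord; lia.
by apply/hasP; exists pi => //; rewrite mem_index_enum.
Qed.

Lemma avgB p c (f : draw p -> rat) : avg (fun pi => c - f pi) = c - avg f.
Proof.
rewrite /avg sumrB mulrBl; congr (_ - _); exact: (avg_const p c).
Qed.

Lemma px_avg p x (f : draw p -> rat) : px x (avg f) = avg (fun pi => px x (f pi)).
Proof. by case: x => //=; rewrite avgB. Qed.

Lemma avg_const_le p (f : draw p -> rat) c : (forall pi : draw p, uniq pi -> f pi <= c) -> avg f <= c.
Proof. by move=> H; rewrite -(avg_const p c); apply: avg_le. Qed.
Lemma avg_const_ge p (f : draw p -> rat) c : (forall pi : draw p, uniq pi -> c <= f pi) -> c <= avg f.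
Proof. by move=> H; rewrite -(avg_const p c); apply: avg_le. Qed.
Lemma avg_const_gt p (f : draw p -> rat) c : (forall pi : draw p, uniq pi -> c < f pi) -> c < avg f.
Proof. by move=> H; rewrite -(avg_const p c); apply: avg_lt. Qed.

Lemma win_side p (v : vprofile p) x : (nX v (~~x) < nX v x)%N -> (nB v < nA v)%N = x.
Proof. by case: x => /= H; [rewrite H | apply/negbTE; rewrite -leqNgt; exact: ltnW]. Qed.

Lemma px_win p (v : vprofile p) x : (nX v (~~x) < nX v x)%N -> px x (winner_prob v) = 1.
Proof. by move=> H; rewrite /winner_prob (win_side H); case: x {H} => /=; ring. Qed.

Lemma px_lose p (v : vprofile p) x : (nX v x < nX v (~~x))%N -> px x (winner_prob v) = 0.
Proof.
move=> H; have := @win_side p v (~~ x); rewrite negbK => /(_ H).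
by rewrite /winner_prob => ->; case: x {H} => /=; ring.
Qed.

Lemma px_beta p (v : vprofile p) x : (0 < nA v + nB v)%N ->
  px x (beta_a v) = (nX v x)%:R / (nX v x + nX v (~~x))%:R.
Proof.
move=> H; rewrite /beta_a; case: x => //=; rewrite addnC.
have Hp : (nB v + nA v)%:R != 0 :> rat by rewrite pnatr_eq0 -lt0n addnC.
rewrite nXF nXT -{1}(divff Hp) -mulrBl; congr (_ / _); rewrite natrD; ring.
Qed.

Lemma tot_pos p (v : vprofile p) x : (nX v x != nX v (~~x))%N -> (0 < nA v + nB v)%N.
Proof. by case: x; rewrite /= ?nXT ?nXF => H; move/eqP: H; lia. Qed.

Lemma beta_gt_half p (v : vprofile p) x : (nX v (~~x) < nX v x)%N -> 1/2 < px x (beta_a v).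
Proof.
move=> H; rewrite px_beta; last by apply: (tot_pos (x:=x)); move: H; lia.
have Hp : 0 < (nX v x + nX v (~~x))%:R :> rat by rewrite ltr0n; lia.
rewrite ltr_pdivlMr // natrD.
have : (nX v (~~x))%:R < (nX v x)%:R :> rat by rewrite ltr_nat.
lra.
Qed.

Lemma beta_lt_half p (v : vprofile p) x : (nX v x < nX v (~~x))%N -> px x (beta_a v) < 1/2.
Proof.
move=> H; rewrite px_beta; last by apply: (tot_pos (x:=x)); move: H; lia.
have Hp : 0 < (nX v x + nX v (~~x))%:R :> rat by rewrite ltr0n; lia.
rewrite ltr_pdivrMr // natrD.
have : (nX v x)%:R < (nX v (~~x))%:R :> rat by rewrite ltr_nat.
lra.
Qed.

Lemma avg_win p (sc : agent p -> cstrat p) v x : (nX v (~~x) < nX v x)%N ->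
  1/2 < px x (conf_avg sc v).
Proof.
move=> H; rewrite conf_avgE px_avg; apply: avg_const_gt => pi _.
rewrite /conf_out; case: (conf_run_val sc v pi (p.+1 - size ([::] : seq ann)) [::]) => ->.
  by rewrite px_win //; lra.
exact: beta_gt_half.
Qed.

Lemma px_conf_01 p (sc : agent p -> cstrat p) v pi k h x :
  0 <= px x (conf_run sc v pi k h) <= 1.
Proof. apply: px_01; exact: conf_run_01. Qed.

Lemma conf_avg_01 p (sc : agent p -> cstrat p) v : 0 <= conf_avg sc v <= 1.
Proof.
rewrite conf_avgE; apply/andP; split.
  by apply: avg_const_ge => pi _; have /andP[] := conf_run_01 sc v pi (p.+1 - 0) [::].
by apply: avg_const_le => pi _; have /andP[] := conf_run_01 sc v pi (p.+1 - 0) [::].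
Qed.

Lemma outcome_01 p (s : strategy p) : 0 <= outcome s <= 1.
Proof. rewrite /outcome; case: ifP => _; [apply/andP; split; lra | exact: conf_avg_01]. Qed.

Definition node_ok p (R : profile p) (sc : agent p -> cstrat p) : Prop :=
  forall (v : vprofile p) (pi : draw p) (h : seq ann),
      ~~ tie v -> uniq pi -> (size h <= p)%N -> all (fun a => a != annY) h ->
      forall i c,
      util R i (conf_out (dev_conf sc i c) v pi h) <= util R i (conf_out sc v pi h).

Lemma node_Y p (R : profile p) sc v (pi : draw p) j : node_ok R sc -> ~~ tie v -> uniq pi ->
  j \in (pi : seq _) -> px (R j) (winner_prob v) <= px (R j) (conf_out sc v pi [::]).
Proof.
move=> H Ht Hu Hj.
have := H v pi [::] Ht Hu (leq0n p) isT j (fun _ _ _ => annY).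
rewrite !util_px.
suff -> : conf_out (dev_conf sc j (fun _ _ _ => annY)) v pi [::] = winner_prob v by [].
have Hi : (index j pi < p.+1)%N by have := index_mem j pi; rewrite Hj size_tuple.
rewrite /conf_out; apply: (conf_run_Y (u := index j pi)) => /=; first by lia.
by move=> h'; rewrite nth_index // /dev_conf eqxx.
Qed.

Lemma node_N_step p (R : profile p) sc v (pi : draw p) x k (h : seq ann) :
  node_ok R sc -> ~~ tie v -> uniq pi -> R (nth ord0 pi (size h)) = x ->
  (size h + k = p)%N -> all (fun a => a != annY) h ->
  px x (conf_run sc v pi k (rcons h annN)) <= px x (conf_run sc v pi k.+1 h).
Proof.
move=> H Ht Hu Rj Hs Hh.
have Hsz : (size h <= p)%N by lia.
have := H v pi h Ht Hu Hsz Hh (nth ord0 pi (size h)) (fun _ _ _ => annN).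
rewrite !util_px Rj /conf_out (_ : (p.+1 - size h = k.+1)%N); last by lia.
move=> Hle; apply: le_trans Hle; rewrite le_eqVlt; apply/orP; left; apply/eqP.
congr (px x _).
rewrite /= /dev_conf eqxx /=.
apply: conf_run_ext => u Hu2 h'; rewrite size_rcons in Hu2.
have : nth ord0 pi u != nth ord0 pi (size h).
  by rewrite nth_uniq ?size_tuple //; lia.
by move=> /negbTE ->.
Qed.

Lemma node_N p (R : profile p) sc v (pi : draw p) x : node_ok R sc -> ~~ tie v -> uniq pi ->
  all (fun j => R j == x) pi -> forall h : seq ann, (size h <= p)%N ->
  all (fun a => a != annY) h -> px x (beta_a v) <= px x (conf_out sc v pi h).
Proof.
move=> H Ht Hu Hall.
have Rall : forall u, (u < p.+1)%N -> R (nth ord0 pi u) = x.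
  move=> u Hu2; apply/eqP; apply: (allP Hall); rewrite mem_nth // size_tuple //.
suff S : forall k (h : seq ann), (size h + k = p)%N -> all (fun a => a != annY) h ->
    px x (beta_a v) <= px x (conf_run sc v pi k.+1 h).
  move=> h Hs Hh; rewrite /conf_out (_ : (p.+1 - size h = (p - size h).+1)%N); last by lia.
  apply: S => //; lia.
elim=> [|k IH] h Hs Hh.
  have := node_N_step H Ht Hu (Rall (size h) (ltac:(lia))) Hs Hh; by [].
apply: le_trans (node_N_step H Ht Hu (Rall (size h) (ltac:(lia))) Hs Hh).
apply: IH; first by rewrite size_rcons; lia.
by rewrite all_rcons Hh.
Qed.

Lemma maj_sup p (R : profile p) : let m := (p.+1 <= #|[pred i | R i]|)%N in
  (p.+1 <= #|[pred j | R j == m]|)%N /\ (#|[pred j | ~~ (R j == m)]| <= p)%N.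
Proof.
move=> m.
have HC : (#|[pred i | R i]| + #|[pred i | ~~ R i]|)%N = p.*2.+1.
  rewrite -[X in _ = X]card_ord -(cardC [pred i | R i]).
  by apply/eqP; rewrite eqn_add2l; apply/eqP; apply: eq_card => j; rewrite !inE.
have E1 : forall x : bool, #|[pred j | R j == x]| = if x then #|[pred i | R i]| else #|[pred i | ~~ R i]|.
  by case; apply: eq_card => j; rewrite !inE ?eqb_id ?eqbF_neg.
have E2 : forall x : bool, #|[pred j | ~~ (R j == x)]| = if x then #|[pred i | ~~ R i]| else #|[pred i | R i]|.
  by case; apply: eq_card => j; rewrite !inE ?eqb_id ?eqbF_neg ?negbK.
rewrite E1 E2 /m; case: ifP => Hm; move: Hm HC;
  generalize #|[pred i | R i]| #|[pred i | ~~ R i]| => a b Hm HC; have := addnn p; lia.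
Qed.

Lemma tot_le p (v : vprofile p) : (nA v + nB v <= p.*2.+1)%N.
Proof.
have := cardC [pred i | v i == vA]; rewrite card_ord => <-.
rewrite leq_add2l; apply: subset_leq_card; apply/subsetP => j.
by rewrite !inE; case: (v j) => // -[].
Qed.

Lemma tot_leX p (v : vprofile p) x : (nX v x + nX v (~~x) <= p.*2.+1)%N.
Proof. by case: x; rewrite /= ?nXT ?nXF ?(addnC (nB v)); apply: tot_le. Qed.

Lemma tieE p (v : vprofile p) x : tie v = (nX v x == nX v (~~ x)).
Proof. by case: x; rewrite /tie //= eq_sym. Qed.

Lemma nX_dev p (v : vprofile p) i y z :
  (nX (fun j => if j == i then y else v j) z + (v i == Some z))%N = (nX v z + (y == Some z))%N.
Proof.
rewrite /nX (cardD1 i) [X in (_ = X + _)%N](cardD1 i) !inE eqxx.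
rewrite [LHS]addnC addnA [LHS]addnAC; congr (_ + _ + _).
by apply: eq_card => j; rewrite !inE; case: eqP.
Qed.

Lemma outcome_dev_self p (s : strategy p) i y :
  outcome (dev s i y (sconf s i)) =
  let v' := fun j => if j == i then y else svote s j in
  if tie v' then 1/2 else conf_avg (sconf s) v'.
Proof.
rewrite /outcome /dev /=.
have -> : dev_conf (sconf s) i (sconf s i) = sconf s.
  by apply: functional_extensionality => j; rewrite /dev_conf; case: eqP => // ->.
by [].
Qed.

Lemma frac_lt (a b a' b' : nat) : a' = (a + 1)%N -> (b' <= b)%N -> (0 < b)%N ->
  (a%:R / (a + b)%:R < a'%:R / (a' + b')%:R :> rat).
Proof.
move=> -> Hb Hb0.
have H1 : 0 < (a + b)%:R :> rat by rewrite ltr0n; lia.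
have H2 : 0 < (a + 1 + b')%:R :> rat by rewrite ltr0n; lia.
rewrite ltr_pdivrMr // mulrAC ltr_pdivlMr // -!natrM ltr_nat; nia.
Qed.

Lemma avg_scale p (f : draw p -> rat) c : avg (fun pi => f pi * c) = avg f * c.
Proof. by rewrite /avg -mulr_suml mulrAC. Qed.

Lemma avg_pos p (f : draw p -> rat) : (forall pi : draw p, uniq pi -> 0 <= f pi) ->
  (exists pi : draw p, uniq pi /\ 0 < f pi) -> 0 < avg f.
Proof.
move=> H [pi0 [Hu Hp]]; rewrite /avg divr_gt0 ?Nd_pos // (bigD1 pi0) //=.
have : 0 <= \sum_(i : draw p | uniq i && (i != pi0)) f i.
  by apply: sumr_ge0 => i /andP[+ _]; apply: H.
lra.
Qed.

Lemma sup_novote p (R : profile p) (v : vprofile p) m :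
  (p.+1 <= #|[pred j | R j == m]|)%N -> (nX v m <= p)%N ->
  exists i, R i = m /\ v i != Some m.
Proof.
move=> Hs Hn; apply: NNPP => Hne.
have : (#|[pred j | R j == m]| <= nX v m)%N.
  apply: subset_leq_card; apply/subsetP => j; rewrite !inE => /eqP Hj.
  by apply: contraT => Hv; case: Hne; exists j.
lia.
Qed.

Lemma uniqueness p (R : profile p) (s : strategy p) : SPE R s -> outcome s = maj_prob R.
Proof.
move=> [H1 [H2 H3]].
have Hn : node_ok R (sconf s) := H3.
have [Hsup Hopp] := maj_sup R.
set m := (p.+1 <= #|[pred i | R i]|)%N in Hsup Hopp.
suff Hm : px m (outcome s) = 1 by rewrite (px_eq1 Hm) /maj_prob.
set v := svote s.
have Htot := tot_leX v m.
have Hout : outcome s = if tie v then 1/2 else conf_avg (sconf s) v by [].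
case Ht: (tie v) in Hout.
  move: Ht; rewrite (tieE v m) => /eqP Ht.
  have [i [Ri Vi]] : exists i, R i = m /\ v i != Some m by apply: sup_novote Hsup _; lia.
  have := H1 i (Some m) (sconf s i).
  rewrite outcome_dev_self /= !util_px Ri Hout.
  set v' := fun j => if j == i then Some m else svote s j.
  have E1 : (nX v' m + (v i == Some m) = nX v m + (Some m == Some m))%N := nX_dev v i (Some m) m.
  have E2 : (nX v' (~~ m) + (v i == Some (~~ m)) = nX v (~~ m) + (Some m == Some (~~ m)))%N := nX_dev v i (Some m) (~~ m).
  rewrite eqxx (negbTE Vi) in E1.
  have Hne : forall b : bool, (Some b == Some (~~ b)) = false by case.
  rewrite Hne in E2.
  have Hw : (nX v' (~~ m) < nX v' m)%N by lia.
  have Ht' : tie v' = false by rewrite (tieE v' m); apply/negbTE; rewrite neq_ltn Hw orbT.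
  rewrite Ht'; have := avg_win (sconf s) Hw.
  have -> : forall b, px b (1/2) = 1/2 by case => /=; lra.
  lra.
have Hnt : nX v m != nX v (~~ m) by rewrite -tieE Ht.
have Hneq : forall a b : bool, ~~ (a == b) -> a = ~~ b by case; case.
have Hhalf : forall b, px b (1/2) = 1/2 by case => /=; lra.
case: (ltngtP (nX v (~~ m)) (nX v m)) => Hc; last by rewrite Hc eqxx in Hnt.
  rewrite Hout conf_avgE px_avg; apply/eqP; rewrite eq_le; apply/andP; split.
    apply: avg_const_le => pi _.
    by have /andP[] := px_conf_01 (sconf s) v pi (p.+1 - size ([::] : seq ann)) [::] m.
  apply: avg_const_ge => pi Hu.
  have [j Hj Rj] := draw_has (P := fun j => R j == m) Hu Hopp.
  by have := node_Y Hn (negbT Ht) Hu Hj; rewrite (eqP Rj) px_win.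
have [i [Ri Vi]] : exists i, R i = m /\ v i != Some m by apply: sup_novote Hsup _; lia.
have := H1 i (Some m) (sconf s i).
rewrite outcome_dev_self /= !util_px Ri Hout.
set v' := fun j => if j == i then Some m else svote s j.
have E1 : (nX v' m + (v i == Some m) = nX v m + (Some m == Some m))%N := nX_dev v i (Some m) m.
have E2 : (nX v' (~~ m) + (v i == Some (~~ m)) = nX v (~~ m) + (Some m == Some (~~ m)))%N := nX_dev v i (Some m) (~~ m).
have Hne : forall b : bool, (Some b == Some (~~ b)) = false by case.
rewrite eqxx (negbTE Vi) in E1; rewrite Hne in E2.
set ind := fun pi : draw p => if all (fun j => R j == m) pi then 1 else 0 : rat.
set rho := px m (beta_a v).
have Hrho : 0 <= rho <= 1 by apply: px_01; apply: beta_01.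
have Hrho2 : rho < 1/2 by apply: beta_lt_half.
have B1 : forall pi : draw p, uniq pi -> px m (conf_out (sconf s) v pi [::]) <= ind pi * rho.
  move=> pi Hu; rewrite /ind; case Hall: (all _ _).
    rewrite mul1r /conf_out.
    case: (conf_run_val (sconf s) v pi (p.+1 - size ([::] : seq ann)) [::]) => ->.
      by rewrite px_lose //; case/andP: Hrho.
    by [].
  rewrite mul0r; move/negbT: Hall; rewrite -has_predC => /hasP [j Hj HRj].
  have Hw' : (nX v (~~ ~~ m) < nX v (~~ m))%N by rewrite negbK.
  have := node_Y Hn (negbT Ht) Hu Hj; rewrite (Hneq _ _ HRj) (px_win Hw') pxN.
  lra.
have Hup : px m (conf_avg (sconf s) v) <= avg (fun pi => ind pi * rho).
  by rewrite conf_avgE px_avg; apply: avg_le.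
have Hup2 : px m (conf_avg (sconf s) v) <= rho.
  apply: le_trans Hup _; apply: avg_const_le => pi _; rewrite /ind; case: (all _ _); case/andP: Hrho; lra.
case Ht' : (tie v').
  by rewrite Hhalf; lra.
case: (ltngtP (nX v' (~~ m)) (nX v' m)) => Hc'.
- by have := avg_win (sconf s) Hc'; lra.
- set rho' := px m (beta_a v').
  have Hlow : avg (fun pi => ind pi * rho') <= px m (conf_avg (sconf s) v').
    rewrite conf_avgE px_avg; apply: avg_le => pi Hu; rewrite /ind; case Hall: (all _ _).
      by rewrite mul1r; apply: (node_N Hn (negbT Ht') Hu Hall).
    by rewrite mul0r; have /andP[] := px_conf_01 (sconf s) v' pi (p.+1 - size ([::] : seq ann)) [::] m.
  have Hlt : rho < rho'.
    rewrite /rho /rho' !px_beta; last 2 first.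
    - by apply: (tot_pos (x := m)); apply/eqP; move: Hc'; clear; lia.
    - by apply: (tot_pos (x := m)); apply/eqP; move: Hc; clear; lia.
    apply: frac_lt; move: E1 E2 Hc; clear; lia.
  have Hpos : 0 < avg ind.
    apply: avg_pos.
      by move=> pi _; rewrite /ind; case: (all _ _).
    have [pi [Hu Hall]] := exists_draw Hsup.
    by exists pi; split => //; rewrite /ind Hall.
  rewrite !avg_scale in Hup Hlow.
  have : avg ind * rho < avg ind * rho' by rewrite ltr_pM2l.
  lra.
- by move: Ht'; rewrite (tieE v' m) Hc' eqxx.
Qed.

Definition sc0 p (R : profile p) : agent p -> cstrat p :=
  fun j v pi h => if R j == (nB v < nA v)%N then annY else annN.
Definition s0 p (R : profile p) : strategy p := Strategy (fun j => Some (R j)) (sc0 R).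

Lemma util_win p (R : profile p) i (v : vprofile p) :
  util R i (winner_prob v) = if R i == (nB v < nA v)%N then 1 else 0.
Proof. by rewrite /util /winner_prob; case: (R i); case: (_ < _)%N => /=; rewrite ?subrr ?subr0. Qed.

Lemma s0_node p (R : profile p) : node_ok R (sc0 R).
Proof.
move=> v pi h Ht Hu Hs Hh i c.
rewrite /conf_out.
set k := (p.+1 - size h)%N.
have Hk : (size h + k = p.+1)%N by rewrite /k; lia.
set w := (nB v < nA v)%N.
have [[u [Hu1 Hu2]] | Hno] := classic (exists u, (size h <= u < p.+1)%N /\ R (nth ord0 pi u) == w).
  have E : conf_run (sc0 R) v pi k h = winner_prob v.
    apply: (conf_run_Y (u := u)); first by lia.
    by move=> h'; rewrite /sc0 Hu2.
  rewrite E.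
  case Hi : (R i == w).
    rewrite util_win -/w Hi util_px.
    by have /andP[] := px_conf_01 (dev_conf (sc0 R) i c) v pi k h (R i).
  have Hni : nth ord0 pi u != i by apply: contraFneq Hi => <-.
  suff -> : conf_run (dev_conf (sc0 R) i c) v pi k h = winner_prob v by [].
  apply: (conf_run_Y (u := u)); first by lia.
  by move=> h'; rewrite /dev_conf (negbTE Hni) /sc0 Hu2.
have E : conf_run (sc0 R) v pi k h = beta_a v.
  apply: conf_run_N => u Hu1 h'; rewrite /sc0.
  case: ifP => // Hr; case: Hno; exists u; split => //; lia.
rewrite E.
have [[u [Hu1 Hu2]] | Hno2] := classic (exists u, (size h <= u < p.+1)%N /\ nth ord0 pi u = i).
  have Hi : R i != w by apply/negP => Hr; apply: Hno; exists u; split => //; rewrite Hu2.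
  case: (conf_run_val (dev_conf (sc0 R) i c) v pi k h) => ->; last by [].
  rewrite util_win -/w (negbTE Hi) util_px.
  by have /andP[] := px_01 (R i) (beta_01 v).
suff -> : conf_run (dev_conf (sc0 R) i c) v pi k h = conf_run (sc0 R) v pi k h by rewrite E.
apply: conf_run_ext => u Hu1 h'; rewrite /dev_conf.
case: eqP => // Heq; case: Hno2; exists u; split => //; lia.
Qed.

Lemma avg_eq_const p (f : draw p -> rat) c : (forall pi : draw p, uniq pi -> f pi = c) -> avg f = c.
Proof.
move=> H; apply/eqP; rewrite eq_le; apply/andP; split.
  by apply: avg_const_le => pi Hu; rewrite H.
by apply: avg_const_ge => pi Hu; rewrite H.
Qed.

Lemma out_win p (sc : agent p -> cstrat p) (v : vprofile p) m :
  (nX v (~~ m) < nX v m)%N ->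
  (forall pi : draw p, uniq pi -> exists2 u, (u < p.+1)%N & forall h', sc (nth ord0 pi u) v pi h' = annY) ->
  px m (conf_avg sc v) = 1.
Proof.
move=> Hw H; rewrite conf_avgE px_avg; apply: avg_eq_const => pi Hu.
have [u Hu1 Hu2] := H pi Hu.
by rewrite /conf_out (conf_run_Y (u := u)) //=; first [exact: px_win | lia].
Qed.

Lemma sup_in_draw p (R : profile p) m (pi : draw p) :
  (#|[pred j | ~~ (R j == m)]| <= p)%N -> uniq pi ->
  exists2 u, (u < p.+1)%N & R (nth ord0 pi u) = m.
Proof.
move=> Hopp Hu; have [j Hj Rj] := draw_has (P := fun j => R j == m) Hu Hopp.
exists (index j pi); first by have := index_mem j pi; rewrite Hj size_tuple.
by rewrite nth_index //; apply/eqP.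
Qed.

Lemma existence p (R : profile p) : SPE R (s0 R) /\ outcome (s0 R) = maj_prob R.
Proof.
have [Hsup Hopp] := maj_sup R.
set m := (p.+1 <= #|[pred i | R i]|)%N in Hsup Hopp.
have Hneq : forall a b : bool, ~~ (a == b) -> a = ~~ b by case; case.
set v0 : vprofile p := fun j => Some (R j).
have NX : forall x, nX v0 x = #|[pred j | R j == x]|.
  by move=> x; apply: eq_card => j; rewrite !inE /v0 /=.
have Hopp' : (#|[pred j | R j == ~~ m]| <= p)%N.
  apply: leq_trans Hopp; apply: subset_leq_card; apply/subsetP => j; rewrite !inE.
  by move/eqP ->; case: (m).
(* generic: any profile v with winner m, any deviation by a non-supporter i (or none) *)
have Key : forall (v : vprofile p) (sc : agent p -> cstrat p) (i : option (agent p)),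
    (nX v (~~ m) < nX v m)%N ->
    (forall j, R j = m -> sc j = sc0 R j) ->
    px m (conf_avg sc v) = 1.
  move=> v sc _ Hw Hsc; apply: out_win => // pi Hu.
  have [u Hu1 Ru] := sup_in_draw Hopp Hu.
  exists u => // h'; rewrite Hsc // /sc0 Ru (win_side Hw) eqxx //.
have Hw0 : (nX v0 (~~ m) < nX v0 m)%N by rewrite !NX; lia.
have Hnt0 : tie v0 = false by rewrite (tieE v0 m); apply/negbTE; rewrite neq_ltn Hw0 orbT.
have Hout0 : px m (outcome (s0 R)) = 1.
  rewrite /outcome /= -/v0 Hnt0; exact: Key None _ _.
have Hmaj : outcome (s0 R) = maj_prob R by rewrite (px_eq1 Hout0).
split => //; split; last split; last exact: s0_node.
- move=> i vi c.
  case Ri : (R i == m).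
    rewrite !util_px (eqP Ri) Hout0.
    by have /andP[] := px_01 m (outcome_01 (dev (s0 R) i vi c)).
  have Ri' := Hneq _ _ (negbT Ri).
  suff : px m (outcome (dev (s0 R) i vi c)) = 1 by move/px_eq1 => ->; rewrite Hmaj.
  set v' := fun j => if j == i then vi else v0 j.
  have S1 : (nX v0 m <= nX v' m)%N.
    apply: subset_leq_card; apply/subsetP => j; rewrite !inE /v' /v0.
    move=> Hj; case: ifP => [/eqP Eji|_ //]; move/eqP: Hj => [Hr]; move: Ri; by rewrite -Eji Hr eqxx.
  have S2 : (nX v' (~~ m) <= nX v0 (~~ m))%N.
    apply: subset_leq_card; apply/subsetP => j; rewrite !inE /v' /v0.
    move=> Hj; case: ifP Hj => [/eqP Eji|_ //] _; by rewrite Eji Ri'.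
  have Hw' : (nX v' (~~ m) < nX v' m)%N by lia.
  have Hnt' : tie v' = false by rewrite (tieE v' m); apply/negbTE; rewrite neq_ltn Hw' orbT.
  rewrite /outcome /dev /= -/v0 -/v' Hnt'.
  apply: (Key v' _ (Some i) Hw') => j Rj; rewrite /dev_conf.
  case: eqP => // Eji; move: Ri; by rewrite -Eji Rj eqxx.
- move=> v Ht i c; rewrite !util_px !conf_avgE !px_avg; apply: avg_le => pi Hu.
  rewrite -!util_px; exact: (@s0_node p R v pi [::] Ht Hu (leq0n p) isT i c).
Qed.

Theorem proposition4 (p : nat) (R : profile p) :
  (forall s : strategy p, SPE R s -> outcome s = maj_prob R) /\
  (exists s : strategy p, SPE R s /\ outcome s = maj_prob R).
Proof.
split; first exact: uniqueness.
by exists (s0 R); apply: existence.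
Qed.
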